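(* Let $R$ be a commutative multiplicative hyperring with identity $1$ having the zero absorbing property, let $\alpha$ be a good endomorphism of $R$, and let $A$ be a hyperideal of $R$. Then: (1) if $\alpha(1)=1$, then $\sqrt[\alpha]{A}=R$ if and only if $A=R$; (2) if $A$ is $\alpha$-prime, then $\sqrt[\alpha]{A^n}=\sqrt[\alpha]{A}$ for all $n\in\mathbb N$.
   Context: A multiplicative hyperring is an abelian group $(R,+)$ with a hyperoperation $\circ:R\times R\to \mathcal P^*(R)$ (nonempty subsets) such that $a\circ(b\circ c)=(a\circ b)\circ c$, $a\circ(b+c)\subseteq a\circ b+a\circ c$, $(b+c)\circ a\subseteq b\circ a+c\circ a$, and $a\circ(-b)=(-a)\circ b=-(a\circ b)$. Products of subsets are unions of elementwise products; for an element or subset $X$, $X^n=X\circ\cdots\circ X$ ($n$ factors). Commutative means $a\circ b=b\circ a$. An identity $1$ satisfies $a\in1\circ a$ for all $a$. $R$ has the zero absorbing property if $0\circ r=r\circ0=\{0\}$ for all $r$. A hyperideal is a nonempty $I$ closed under subtraction with $r\circ x\subseteq I$ for $r\in R$, $x\in I$. Standing assumption: all hyperideals are $\mathbf C$-hyperideals, i.e. for every finite product $A=r_1\circ\cdots\circ r_n$, $A\cap I\ne\emptyset$ implies $A\subseteq I$. A good endomorphism $\alpha$ satisfies $\alpha(x+y)=\alpha(x)+\alpha(y)$ and $\alpha(x\circ y)=\alpha(x)\circ\alpha(y)$; it is applied to sets elementwise. The $\alpha$-radical is $\sqrt[\alpha]{J}=\{r\in R:\alpha(r^n)\subseteq J\text{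 for some }n\in\mathbb N\}$. A hyperideal $I$ is $\alpha$-prime if for all $x,y$, $x\circ y\subseteq I$ implies $x\in I$ or $\alpha(y)\in I$. *)

(* Defs.v *)
From mathcomp Require Import all_boot all_algebra.
Set Implicit Arguments. Unset Strict Implicit. Unset Printing Implicit Defensive.
Import GRing.Theory.
Local Open Scope ring_scope.

Definition hset (T : Type) := T -> Prop.

Section Hyper.
Variable R : zmodType.
Variable hm : R -> R -> hset R.

Definition hsubset (X Y : hset R) : Prop := forall x, X x -> Y x.
Definition hseteq (X Y : hset R) : Prop := forall x, X x <-> Y x.
Definition hsingle (a : R) : hset R := fun x => x = a.
Definition hfull : hset R := fun _ => True.

Definition hsetprod (X Y : hset R) : hset R :=
  fun z => exists x y, X x /\ Y y /\ hm x y z.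
Definition hsetadd (X Y : hset R) : hset R :=
  fun z => exists x y, X x /\ Y y /\ z = x + y.
Definition hsetopp (X : hset R) : hset R := fun z => X (- z).

(* X^n = X ∘ ... ∘ X (n factors); only meaningful for n >= 1
   (all uses below require 0 < n; hpow X 0 is never used). *)
Fixpoint hpow (X : hset R) (n : nat) : hset R :=
  match n with
  | 0 => X
  | 1 => X
  | m.+1 => hsetprod X (hpow X m)
  end.

(* r_1 ∘ ... ∘ r_n for a nonempty list r :: rs *)
Fixpoint hprod (r : R) (rs : seq R) : hset R :=
  match rs with
  | [::] => hsingle r
  | s :: rs' => hsetprod (hsingle r) (hprod s rs')
  end.

Definition is_mhyperring : Prop :=
  (forall a b, exists z, hm a b z) /\
  (forall a b c, hseteq (hsetprod (hsingle a) (hm b c))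
                        (hsetprod (hm a b) (hsingle c))) /\
  (forall a b c, hsubset (hm a (b + c)) (hsetadd (hm a b) (hm a c))) /\
  (forall a b c, hsubset (hm (b + c) a) (hsetadd (hm b a) (hm c a))) /\
  (forall a b, hseteq (hm a (- b)) (hsetopp (hm a b))) /\
  (forall a b, hseteq (hm (- a) b) (hsetopp (hm a b))).

Definition hcommutative : Prop := forall a b, hseteq (hm a b) (hm b a).

Definition hidentity (one : R) : Prop := forall a, hm one a a.

Definition zero_absorbing : Prop :=
  forall r, hseteq (hm 0 r) (hsingle 0) /\ hseteq (hm r 0) (hsingle 0).

Definition hyperideal (I : hset R) : Prop :=
  (exists x, I x) /\
  (forall x y, I x -> I y -> I (x - y)) /\
  (forall r x, I x -> hsubset (hm r x) I).

Definition C_hyperideal (I : hset R) : Prop :=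
  forall r rs, (exists z, hprod r rs z /\ I z) -> hsubset (hprod r rs) I.

Definition all_hyperideals_C : Prop :=
  forall I, hyperideal I -> C_hyperideal I.

Definition himage (f : R -> R) (X : hset R) : hset R :=
  fun z => exists x, X x /\ z = f x.

Definition good_endo (alpha : R -> R) : Prop :=
  (forall x y, alpha (x + y) = alpha x + alpha y) /\
  (forall x y, hseteq (himage alpha (hm x y)) (hm (alpha x) (alpha y))).

Definition alpha_radical (alpha : R -> R) (J : hset R) : hset R :=
  fun r => exists n, (0 < n)%N /\ hsubset (himage alpha (hpow (hsingle r) n)) J.

Definition alpha_prime (alpha : R -> R) (I : hset R) : Prop :=
  hyperideal I /\
  forall x y, hsubset (hm x y) I -> I x \/ I (alpha y).

End Hyper.

(* Main.v *)
Require Import Defs.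
From mathcomp Require Import all_boot all_algebra.
Local Open Scope ring_scope.

Section H.
Variable R : zmodType.
Variable hm : R -> R -> hset R.

Lemma hpow_S (X : hset R) k : (0 < k)%N -> hpow hm X k.+1 = hsetprod hm X (hpow hm X k).
Proof. by case: k. Qed.

Lemma prod_mono (X X' Y Y' : hset R) : hsubset X X' -> hsubset Y Y' ->
  hsubset (hsetprod hm X Y) (hsetprod hm X' Y').
Proof. move=> hX hY z [x [y [Hx [Hy Hz]]]]; exists x, y; split; [exact: hX|split; [exact: hY|done]]. Qed.

Hypothesis assoc : forall a b c, hseteq (hsetprod hm (hsingle a) (hm b c))
                        (hsetprod hm (hm a b) (hsingle c)).

Lemma assocR (X Y Z : hset R) :
  hsubset (hsetprod hm X (hsetprod hm Y Z)) (hsetprod hm (hsetprod hm X Y) Z).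
Proof.
move=> z [a [w [Ha [[b [c [Hb [Hc Hw]]]] Hz]]]].
have : hsetprod hm (hsingle a) (hm b c) z by exists a, w.
move/(assoc a b c) => [u [c' [Hu [Hc' Hz']]]].
rewrite /hsingle in Hc'; subst c'.
exists u, c; split; last by split.
by exists a, b.
Qed.

Lemma hpow_add (X : hset R) a b : (0 < a)%N -> (0 < b)%N ->
  hsubset (hpow hm X (a + b)) (hsetprod hm (hpow hm X a) (hpow hm X b)).
Proof.
move=> + Hb; elim: a => [//|a IH] _.
case: a IH => [|a] IH.
  by rewrite add1n hpow_S.
rewrite addSn hpow_S ?addn_gt0 // hpow_S //.
move=> z Hz; apply: assocR.
exact: (@prod_mono X X _ _ (fun x h => h) (IH isT) z Hz).
Qed.

End H.

Theorem mainTheorem14 (R : zmodType) (hm : R -> R -> hset R) (one : R)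
  (alpha : R -> R) (A : hset R) :
  is_mhyperring hm -> hcommutative hm -> hidentity hm one ->
  zero_absorbing hm -> all_hyperideals_C hm ->
  good_endo hm alpha -> hyperideal hm A ->
  (alpha one = one ->
     (hseteq (alpha_radical hm alpha A) (@hfull R) <-> hseteq A (@hfull R))) /\
  (alpha_prime hm alpha A ->
     forall n : nat, (0 < n)%N ->
       hseteq (alpha_radical hm alpha (hpow hm A n)) (alpha_radical hm alpha A)).
Proof.
move=> [_ [Has _]] Hcom Hid _ _ [_ Hal] [_ [_ Hid2]].
split.
  move=> H1; split.
    move=> Hrad a; split => // _.
    have [n [Hn Hs]] := proj2 (Hrad one) I.
    have Hp : forall k, hpow hm (hsingle one) k one.
      elim=> [|k IH]; first by [].
      case: k IH => [|k] IH; first by [].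
      by exists one, one.
    have A1 : A one by rewrite -H1; apply: Hs; exists one.
    apply: (Hid2 a one A1); apply/Hcom; exact: Hid.
  move=> HA r; split => // _; exists 1%N; split => // z _; exact/HA.
move=> _ n Hn.
have imgprod : forall Y Z, hsubset (himage alpha (hsetprod hm Y Z))
    (hsetprod hm (himage alpha Y) (himage alpha Z)).
  move=> Y Z w [z [[y [u [Hy [Hu Hz]]]] ->]].
  exists (alpha y), (alpha u); split; first by exists y.
  split; first by exists u.
  by apply/Hal; exists z.
move=> r; split.
  move=> [m [Hm Hs]]; exists m; split => // z Hz.
  move: (Hs z Hz); clear Hs.
  case: n Hn => [//|[|n]] _ //.
  move=> [x0 [y [Hx [Hy Hxy]]]].
  by apply: (Hid2 y x0 Hx); apply/Hcom.
move=> [m [Hm Hs]]; exists (m * n)%N; split; first by rewrite muln_gt0 Hm.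
case: n Hn => [//|j] _.
elim: j => [|j IH]; first by rewrite muln1.
rewrite mulnS hpow_S //.
move=> w [z [Hz ->]].
have Hmj : (0 < m * j.+1)%N by rewrite muln_gt0 Hm.
have Hz' := @hpow_add _ _ Has _ _ _ Hm Hmj z Hz.
apply: (@prod_mono _ _ _ _ _ _ Hs IH); apply: imgprod; by exists z.
Qed.
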